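(* Let $n\ge1$. For every $\mathcal C\in\mathbf{Rel}^n\mathbf{Cat}$, the counit map $\varepsilon\mathcal C\colon KN\mathcal C\to\mathcal C$ of the adjunction $K\dashv N$ is an isomorphism in $\mathbf{Rel}^n\mathbf{Cat}$.
   Context: An $n$-relative category $\mathcal C=(a\mathcal C,v_1\mathcal C,\dots,v_n\mathcal C,w\mathcal C)$ consists of a category $a\mathcal C$ and subcategories $v_1\mathcal C,\dots,v_n\mathcal C,w\mathcal C\subset a\mathcal C$, each containing all objects, with $w\mathcal C\subset v_i\mathcal C$ for all $i$, such that (i) every map of $a\mathcal C$ is a finite composite of maps in the $v_i\mathcal C$, and (ii) every relation in $a\mathcal C$ is a consequence of the commutativity of squares $y_2x_1=x_2y_1$ with $x_1,x_2\in v_i\mathcal C$, $y_1,y_2\in v_j\mathcal C$ ($i,j$ not necessarily distinct). $\mathbf{Rel}^n\mathbf{Cat}$ is the category of small $n$-relative categories and functors of ambient categories preserving $w$ and each $v_i$. For $p\ge0$, $\mathbf p$ is the poset $0\to\cdots\to p$ and $|\mathbf p|$ its discrete subcategory; $\mathbf p_n^{v_n}\times\cdots\times\mathbf p_1^{v_1}\times\mathbf q^w$ is the $n$-relative category with ambient category $\mathbf p_n\times\cdots\times\mathbf p_1\times\mathbf q$, $w=|\mathbf p_n|\times\cdots\times|\mathbf p_1|\times\mathbf q$, $v_i=|\mathbf p_n|\times\cdots\times\mathbf p_i\times\cdots\times|\mathbf p_1|\times\mathbf q$. $\mathrm{s}^n\mathcal S$ is the category of $(n+1)$-simplicial sets with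 standard multisimplices $\Delta[p_n,\dots,p_1,q]$. The $n$-simplicial nerve $N\mathcal C$ has as $(p_n,\dots,p_1,q)$-simplices the relative functors $\mathbf p_n^{v_n}\times\cdots\times\mathbf p_1^{v_1}\times\mathbf q^w\to\mathcal C$; $K$ is its left adjoint, the colimit-preserving functor with $K\Delta[p_n,\dots,p_1,q]=\mathbf p_n^{v_n}\times\cdots\times\mathbf p_1^{v_1}\times\mathbf q^w$. *)

(* Defs.v *)
From Stdlib Require Import ProofIrrelevance.
From mathcomp Require Import all_boot.

Set Implicit Arguments. Unset Strict Implicit. Unset Printing Implicit Defensive.

Record Cat := {
  Ob :> Type;
  Hom : Ob -> Ob -> Type;
  idm : forall x, Hom x x;
  comp : forall x y z, Hom y z -> Hom x y -> Hom x z;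
  comp1m : forall x y (f : Hom x y), comp (idm y) f = f;
  compm1 : forall x y (f : Hom x y), comp f (idm x) = f;
  compA : forall x y z t (f : Hom x y) (g : Hom y z) (h : Hom z t),
      comp h (comp g f) = comp (comp h g) f }.
Arguments Hom {C} x y : rename.
Arguments idm {C} x : rename.
Arguments comp {C x y z} g f : rename.

Record MCat (n : nat) := {
  mcat :> Cat;
  mv : 'I_n -> forall x y : mcat, Hom x y -> Prop;
  mw : forall x y : mcat, Hom x y -> Prop }.
Arguments mv {n C} i {x y} f : rename.
Arguments mw {n C x y} f : rename.

Inductive vpath n (C : MCat n) : C -> C -> Type :=
| vnil x : vpath x x
| vcons x y z (i : 'I_n) (f : Hom x y) : mv i f -> vpath y z -> vpath x z.
Arguments vnil {n C} x.
Arguments vcons {n C x y z} i f _ _.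

Fixpoint veval {n} {C : MCat n} {x z : C} (p : vpath x z) : Hom x z :=
  match p with
  | vnil x => idm x
  | vcons _ _ _ _ f _ r => comp (veval r) f
  end.

(* Elementary relations between composites: commutative squares
   y2 x1 = x2 y1 with x1,x2 in v_i and y1,y2 in v_j, and the fact that an
   identity map (in some v_i) is the empty composite; closed under
   pre- and post-composition. *)
Inductive vstep n (C : MCat n) : forall x z : C, vpath x z -> vpath x z -> Prop :=
| vs_sq a b c d z (i j : 'I_n) (x1 : Hom a b) (y2 : Hom b d) (y1 : Hom a c)
    (x2 : Hom c d) hx1 hy2 hy1 hx2 (r : vpath d z) :
    comp y2 x1 = comp x2 y1 ->
    vstep (vcons i x1 hx1 (vcons j y2 hy2 r)) (vcons j y1 hy1 (vcons i x2 hx2 r))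
| vs_id x z (i : 'I_n) (h : mv i (idm x)) (r : vpath x z) :
    vstep (vcons i (idm x) h r) r
| vs_cons x y z (i : 'I_n) (f : Hom x y) hf (p q : vpath y z) :
    vstep p q -> vstep (vcons i f hf p) (vcons i f hf q).

(* The congruence generated: "is a consequence of". *)
Inductive vequiv n (C : MCat n) (x z : C) : vpath x z -> vpath x z -> Prop :=
| ve_step p q : vstep p q -> vequiv p q
| ve_refl p : vequiv p p
| ve_sym p q : vequiv p q -> vequiv q p
| ve_trans p q r : vequiv p q -> vequiv q r -> vequiv p r.

Record RelCat (n : nat) := {
  rm :> MCat n;
  v_id : forall i (x : rm), mv i (idm x);
  v_comp : forall i (x y z : rm) (f : Hom x y) (g : Hom y z),
      mv i f -> mv i g -> mv i (comp g f);
  w_id : forall x : rm, mw (idm x);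
  w_comp : forall (x y z : rm) (f : Hom x y) (g : Hom y z),
      mw f -> mw g -> mw (comp g f);
  w_sub_v : forall i (x y : rm) (f : Hom x y), mw f -> mv i f;
  (* (i) every map is a finite composite of maps in the v_i *)
  rel_gen : forall (x y : rm) (f : Hom x y), exists p : vpath x y, veval p = f;
  (* (ii) every relation is a consequence of the commutative squares *)
  rel_rel : forall (x y : rm) (p q : vpath x y), veval p = veval q -> vequiv p q }.

Record Fun (C D : Cat) := {
  fob :> C -> D;
  fhom : forall x y : C, Hom x y -> Hom (fob x) (fob y);
  fhom_id : forall x, fhom (idm x) = idm (fob x);
  fhom_comp : forall x y z (f : Hom x y) (g : Hom y z),
      fhom (comp g f) = comp (fhom g) (fhom f) }.
Arguments fhom {C D} F {x y} f : rename.

Record RelFun n (C D : MCat n) := {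
  rf :> Fun C D;
  rf_v : forall i (x y : C) (f : Hom x y), mv i f -> mv i (fhom rf f);
  rf_w : forall (x y : C) (f : Hom x y), mw f -> mw (fhom rf f) }.

Section RelFunOps.
Variable n : nat.

Definition Fid (C : Cat) : Fun C C.
Proof.
  refine {| fob := fun x => x; fhom := fun x y f => f |}; by [].
Defined.

Definition Fcomp (C D E : Cat) (G : Fun D E) (F : Fun C D) : Fun C E.
Proof.
  refine {| fob := fun x => G (F x); fhom := fun x y f => fhom G (fhom F f) |}.
  - by move=> x; rewrite !fhom_id.
  - by move=> x y z f g; rewrite !fhom_comp.
Defined.

Definition Rid (C : MCat n) : RelFun C C.
Proof. refine {| rf := Fid C |}; by []. Defined.

Definition Rcomp (C D E : MCat n) (G : RelFun D E) (F : RelFun C D) : RelFun C E.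
Proof.
  refine {| rf := Fcomp G F |}.
  - by move=> i x y f hf; apply: rf_v; apply: rf_v.
  - by move=> x y f hf; apply: rf_w; apply: rf_w.
Defined.

Definition isomorphism (C D : MCat n) (F : RelFun C D) : Prop :=
  exists G : RelFun D C, Rcomp G F = Rid C /\ Rcomp F G = Rid D.

(* Standard n-relative categories p_n^v x ... x p_1^v x q^w            *)
(* A multi-index ps : 'I_n.+1 -> nat: ps ord0 = q,                     *)
(* ps (lift ord0 i) = p_{i+1} for i : 'I_n.                            *)
Definition PObj (ps : 'I_n.+1 -> nat) := forall k : 'I_n.+1, 'I_(ps k).+1.

Definition Ple ps (x y : PObj ps) : bool := [forall k, (x k <= y k)%N].

Lemma Ple_refl ps (x : PObj ps) : Ple x x.
Proof. by apply/forallP => k. Qed.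

Lemma Ple_trans ps (x y z : PObj ps) : Ple y z -> Ple x y -> Ple x z.
Proof.
  move=> /forallP h2 /forallP h1; apply/forallP => k.
  exact: leq_trans (h1 k) (h2 k).
Qed.

Definition PCat (ps : 'I_n.+1 -> nat) : Cat.
Proof.
  refine {| Ob := PObj ps; Hom := fun x y => is_true (Ple x y);
            idm := @Ple_refl ps; comp := fun x y z g f => Ple_trans g f |};
  by move=> *; apply: bool_irrelevance.
Defined.

Definition Pv ps (i : 'I_n) (x y : PCat ps) (_ : Hom x y) : Prop :=
  forall k : 'I_n.+1, k != ord0 -> k != lift ord0 i -> (x k : nat) = y k.
Definition Pw ps (x y : PCat ps) (_ : Hom x y) : Prop :=
  forall k : 'I_n.+1, k != ord0 -> (x k : nat) = y k.

Definition PStd (ps : 'I_n.+1 -> nat) : MCat n :=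
  {| mcat := PCat ps; mv := @Pv ps; mw := @Pw ps |}.

(* Maps of Delta^{n+1}: tuples of monotone maps [a] -> [b]. *)
Record Mono (a b : nat) := {
  mf :> 'I_a.+1 -> 'I_b.+1;
  mf_mono : forall i j : 'I_a.+1, (i <= j)%N -> (mf i <= mf j)%N }.

Definition Pmap_ob ps' ps (al : forall k, Mono (ps' k) (ps k))
  (x : PObj ps') : PObj ps := fun k => al k (x k).

Lemma Pmap_le ps' ps (al : forall k, Mono (ps' k) (ps k)) (x y : PObj ps') :
  Ple x y -> Ple (Pmap_ob al x) (Pmap_ob al y).
Proof.
  move=> /forallP h; apply/forallP => k; exact: mf_mono (h k).
Qed.

Definition Pmap_fun ps' ps (al : forall k, Mono (ps' k) (ps k)) :
  Fun (PCat ps') (PCat ps).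
Proof.
  refine {| fob := (Pmap_ob al : PCat ps' -> PCat ps);
            fhom := fun x y f => Pmap_le al f |};
  by move=> *; apply: bool_irrelevance.
Defined.

Definition Pmap ps' ps (al : forall k, Mono (ps' k) (ps k)) :
  RelFun (PStd ps') (PStd ps).
Proof.
  refine (@Build_RelFun n (PStd ps') (PStd ps) (Pmap_fun al) _ _).
  - move=> i x y f hf k h1 h2 /=; rewrite /Pmap_ob.
    by have /val_inj -> := hf k h1 h2.
  - move=> x y f hf k h1 /=; rewrite /Pmap_ob.
    by have /val_inj -> := hf k h1.
Defined.

(* The n-simplicial nerve and maps of (n+1)-simplicial sets between    *)
(* nerves.                                                             *)
Definition Simp (C : MCat n) (ps : 'I_n.+1 -> nat) := RelFun (PStd ps) C.

Record SMap (C D : MCat n) := {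
  sm : forall ps, Simp C ps -> Simp D ps;
  sm_nat : forall ps ps' (al : forall k, Mono (ps' k) (ps k)) (s : Simp C ps),
      sm (Rcomp s (Pmap al)) = Rcomp (sm s) (Pmap al) }.

(* (L, eta : NC -> NL) is a universal arrow from NC to N, i.e.
   L = K N C with eta the unit of K -| N at NC. *)
Definition universal (C L : RelCat n) (eta : SMap C L) : Prop :=
  forall (D : RelCat n) (f : SMap C D),
    exists g : RelFun L D,
      (forall ps (s : Simp C ps), Rcomp g (sm eta s) = sm f s) /\
      (forall g' : RelFun L D,
          (forall ps (s : Simp C ps), Rcomp g' (sm eta s) = sm f s) -> g' = g).

(* e : L -> C is the counit: the adjunct of id_{NC}, i.e. N e o eta = id. *)
Definition is_counit (C L : RelCat n) (eta : SMap C L) (e : RelFun L C) : Prop :=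
  forall ps (s : Simp C ps), Rcomp e (sm eta s) = s.

End RelFunOps.

(* Main.v *)
From Stdlib Require Import ProofIrrelevance FunctionalExtensionality ClassicalEpsilon.
Require Import Defs.
From mathcomp Require Import all_boot zify.
Set Implicit Arguments. Unset Strict Implicit. Unset Printing Implicit Defensive.

Notation cmp := Defs.comp.

Definition castHom (C : Cat) (a a' b b' : C) (ea : a = a') (eb : b = b') (h : Hom a b) : Hom a' b' :=
  match ea in _ = a0 return Hom a0 b' with
  | erefl => match eb in _ = b0 return Hom a b0 with erefl => h end end.

Lemma castHom_irr (C : Cat) (a a' b b' : C) (ea ea' : a = a') (eb eb' : b = b') h :
  castHom ea eb h = castHom ea' eb' h.
Proof. by rewrite (proof_irrelevance _ ea ea') (proof_irrelevance _ eb eb'). Qed.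

Lemma castHom_refl (C : Cat) (a b : C) (ea : a = a) (eb : b = b) h : castHom ea eb h = h.
Proof. by rewrite (proof_irrelevance _ ea erefl) (proof_irrelevance _ eb erefl). Qed.

Lemma castHom_trans (C : Cat) (a a' a'' b b' b'' : C) (ea : a = a') (ea' : a' = a'')
  (eb : b = b') (eb' : b' = b'') h :
  castHom ea' eb' (castHom ea eb h) = castHom (etrans ea ea') (etrans eb eb') h.
Proof. by case: a'' / ea'; case: b'' / eb'; case: a' / ea; case: b' / eb. Qed.

Lemma castHom_comp (C : Cat) (a a' b b' c c' : C) (ea : a = a') (eb : b = b') (ec : c = c')
  (g : Hom b c) (h : Hom a b) :
  castHom ea ec (cmp g h) = cmp (castHom eb ec g) (castHom ea eb h).
Proof. by case: a' / ea; case: b' / eb; case: c' / ec. Qed.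

Lemma castHom_idm (C : Cat) (a a' : C) (ea ea' : a = a') :
  castHom ea ea' (idm a) = idm a'.
Proof. by case: a' / ea ea'=> ea'; rewrite castHom_refl. Qed.

Lemma castHom_sym (C : Cat) (a a' b b' : C) (ea : a = a') (eb : b = b') h h' :
  castHom ea eb h = h' -> h = castHom (esym ea) (esym eb) h'.
Proof. by case: a' / ea h'; case: b' / eb. Qed.

Lemma castHom_fhom (C D : Cat) (F : Fun C D) (a a' b b' : C) (ea : a = a') (eb : b = b')
  (ea' : F a = F a') (eb' : F b = F b') h :
  castHom ea' eb' (fhom F h) = fhom F (castHom ea eb h).
Proof. by case: a' / ea ea'; case: b' / eb eb' => *; rewrite castHom_refl. Qed.

Lemma castHom_mv n (C : MCat n) i (a a' b b' : C) (ea : a = a') (eb : b = b') h :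
  mv i h -> mv i (castHom ea eb h).
Proof. by case: a' / ea; case: b' / eb. Qed.

Lemma castHom_mw n (C : MCat n) (a a' b b' : C) (ea : a = a') (eb : b = b') h :
  mw h -> mw (castHom ea eb h).
Proof. by case: a' / ea; case: b' / eb. Qed.

Lemma RelFun_ext n (A B : MCat n) (F G : RelFun A B) (E : forall x, F x = G x) :
  (forall x y (h : Hom x y), castHom (E x) (E y) (fhom F h) = fhom G h) -> F = G.
Proof.
  case: F E => [[fo fh fid fcomp] fv fw]; case: G => [[go gh gid gcomp] gv gw] /= E H.
  have Eo : fo = go := functional_extensionality _ _ E.
  subst go.
  have Eh : fh = gh.
    apply: functional_extensionality_dep => x; apply: functional_extensionality_dep => y.
    apply: functional_extensionality => h.
    by rewrite -H castHom_refl.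
  subst gh.
  have -> : gid = fid by apply: proof_irrelevance.
  have -> : gcomp = fcomp by apply: proof_irrelevance.
  have -> : gv = fv by apply: proof_irrelevance.
  have -> : gw = fw by apply: proof_irrelevance.
  by [].
Qed.

Lemma RelFun_hom n (A B : MCat n) (F G : RelFun A B) (E : F = G) x y (h : Hom x y)
  (ex : F x = G x) (ey : F y = G y) :
  castHom ex ey (fhom F h) = fhom G h.
Proof. by subst G; rewrite castHom_refl. Qed.

Lemma fhom_PCat_eq n (ps : 'I_n.+1 -> nat) (D : Cat) (F : Fun (PCat ps) D) (u u' v v' : PObj ps)
  (X Y : D) (e1 : F u = X) (e2 : F v = Y) (e1' : F u' = X) (e2' : F v' = Y)
  (le : Ple u v) (le' : Ple u' v') :
  u = u' -> v = v' -> castHom e1 e2 (fhom F le) = castHom e1' e2' (fhom F le').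
Proof.
  move=> eu ev; subst u' v'.
  by rewrite (proof_irrelevance _ e1 e1') (proof_irrelevance _ e2 e2') (bool_irrelevance le le').
Qed.

Section Shapes.
Variable n : nat.
Variable C : RelCat n.

Definition ps0 : 'I_n.+1 -> nat := fun _ => 0%N.
Definition o0 : PObj ps0 := fun _ => ord0.

Lemma PObj0 (z : PObj ps0) : z = o0.
Proof. apply: functional_extensionality_dep => k; apply: val_inj; by case: (z k) => [[]]. Qed.

Definition pt_fun (x : C) : Fun (PCat ps0) C.
Proof.
  refine (@Build_Fun (PCat ps0) C (fun _ => x) (fun _ _ _ => idm x) _ _) => //.
  by move=> *; rewrite comp1m.
Defined.

Definition pt (x : C) : Simp C ps0.
Proof.
  refine (@Build_RelFun n (PStd ps0) C (pt_fun x) _ _) => /=.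
  - by move=> *; apply: v_id.
  - by move=> *; apply: w_id.
Defined.

Definition cls (k : 'I_n.+1) (x y : C) (h : Hom x y) : Prop :=
  (forall i, (k = ord0 \/ k = lift ord0 i) -> mv i h) /\ (k = ord0 -> mw h).

Lemma cls_v i (x y : C) (h : Hom x y) : mv i h -> cls (lift ord0 i) h.
Proof.
  move=> hv; split.
  - move=> j [] e; first by move/(congr1 val): e.
    by move/lift_inj: e => <-.
  - by move/(congr1 val).
Qed.

Lemma cls_w (x y : C) (h : Hom x y) : mw h -> cls ord0 h.
Proof. by move=> hw; split=> // i _; apply: w_sub_v. Qed.

Lemma cls_id k (x : C) : cls k (idm x).
Proof. by split=> *; [apply: v_id | apply: w_id]. Qed.

Lemma cls_comp k (x y z : C) (h1 : Hom x y) (h2 : Hom y z) :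
  cls k h1 -> cls k h2 -> cls k (cmp h2 h1).
Proof.
  move=> [a1 b1] [a2 b2]; split.
  - by move=> i e; apply: v_comp; [apply: a1 | apply: a2].
  - by move=> e; apply: w_comp; [apply: b1 | apply: b2].
Qed.

Lemma cls_cast k (x x' y y' : C) (ex : x = x') (ey : y = y') (h : Hom x y) :
  cls k h -> cls k (castHom ex ey h).
Proof. by case: x' / ex; case: y' / ey. Qed.

Lemma Pv_moved (ps : 'I_n.+1 -> nat) (i : 'I_n) (z z' : PCat ps) (le : Hom z z') (j : 'I_n.+1) :
  Pv i le -> (z j : nat) != z' j -> j = ord0 \/ j = lift ord0 i.
Proof.
  move=> hv hne; case: (eqVneq j ord0) => [->|h0]; first by left.
  case: (eqVneq j (lift ord0 i)) => [->|h1]; first by right.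
  by rewrite (hv j h0 h1) eqxx in hne.
Qed.

Lemma Pw_moved (ps : 'I_n.+1 -> nat) (z z' : PCat ps) (le : Hom z z') (j : 'I_n.+1) :
  Pw le -> (z j : nat) != z' j -> j = ord0.
Proof.
  move=> hw hne; case: (eqVneq j ord0) => [->|h0] //.
  by rewrite (hw j h0) eqxx in hne.
Qed.

Lemma Ple_le (ps : 'I_n.+1 -> nat) (z z' : PObj ps) j : Ple z z' -> (z j <= z' j)%N.
Proof. by move/forallP. Qed.

Definition ps1 (k : 'I_n.+1) : 'I_n.+1 -> nat := fun j => nat_of_bool (j == k).

Section Edge.
Variables (k : 'I_n.+1) (x y : C) (h : Hom x y) (hc : cls k h).

Definition eobj (z : PObj (ps1 k)) : C := if (z k : nat) == 0%N then x else y.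

Definition ehom (b b' : bool) : (b' -> b) -> Hom (if b then x else y) (if b' then x else y).
Proof.
  case: b; case: b' => H.
  - exact: idm x.
  - exact: h.
  - exact: False_rect _ (notF (H isT)).
  - exact: idm y.
Defined.

Lemma e_mono (z z' : PObj (ps1 k)) : Ple z z' -> ((z' k : nat) == 0%N) -> ((z k : nat) == 0%N).
Proof. move=> /forallP /(_ k) le /eqP e; rewrite e leqn0 in le; exact: le. Qed.

Definition edge_fun : Fun (PCat (ps1 k)) C.
Proof.
  refine (@Build_Fun (PCat (ps1 k)) C eobj (fun z z' le => ehom (e_mono le)) _ _).
  - move=> z; rewrite /eobj; move: (e_mono _); case: ((z k : nat) == 0%N) => //.
  - move=> z1 z2 z3 l1 l2 /=; rewrite /eobj.
    move: (e_mono _) (e_mono l1) (e_mono l2).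
    case: ((z1 k : nat) == 0%N); case: ((z2 k : nat) == 0%N); case: ((z3 k : nat) == 0%N) => //= p1 p2 p3;
      rewrite ?comp1m ?compm1 //; by case: (notF (p2 isT)) || case: (notF (p3 isT)) || case: (notF (p1 isT)).
Defined.

Definition edge : Simp C (ps1 k).
Proof.
  refine (@Build_RelFun n (PStd (ps1 k)) C edge_fun _ _) => /=.
  - move=> i z z' le hv; rewrite /eobj.
    have := @Pv_moved _ i z z' le k hv.
    move: (e_mono _); case E1: ((z k : nat) == 0%N); case E2: ((z' k : nat) == 0%N) => //= p mv;
      try (by apply: v_id); try (by case: (notF (p isT))).
    apply: hc.1; apply: mv; by rewrite (eqP E1) eq_sym E2.
  - move=> z z' le hw; rewrite /eobj.
    have := @Pw_moved _ z z' le k hw.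
    move: (e_mono _); case E1: ((z k : nat) == 0%N); case E2: ((z' k : nat) == 0%N) => //= p mv;
      try (by apply: w_id); try (by case: (notF (p isT))).
    apply: hc.2; apply: mv; by rewrite (eqP E1) eq_sym E2.
Defined.

Definition a0 : PObj (ps1 k) := fun _ => ord0.
Definition a1 : PObj (ps1 k) := fun _ => ord_max.
Lemma le01 : Ple a0 a1. Proof. by apply/forallP. Qed.

Lemma edge_a1 : edge a1 = y.
Proof. by rewrite /= /eobj /= /ps1 eqxx. Qed.

End Edge.

Definition ps2 (k : 'I_n.+1) : 'I_n.+1 -> nat := fun j => if j == k then 2%N else 0%N.

Section Tri.
Variables (k : 'I_n.+1) (x y z : C) (h1 : Hom x y) (h2 : Hom y z) (hc1 : cls k h1) (hc2 : cls k h2).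

Definition tobj (m : nat) : C := match m with 0 => x | 1 => y | _ => z end.

Definition thom (m m' : nat) : (m <= m')%N -> Hom (tobj m) (tobj m').
Proof.
  case: m => [|[|m]]; case: m' => [|[|m']] => p /=.
  - exact: idm x.
  - exact: h1.
  - exact: cmp h2 h1.
  - exact: False_rect _ (notF p).
  - exact: idm y.
  - exact: h2.
  - exact: False_rect _ (notF p).
  - exact: False_rect _ (notF p).
  - exact: idm z.
Defined.

Lemma thom_id m p : thom (m:=m) (m':=m) p = idm (tobj m).
Proof. by case: m p => [|[|m]]. Qed.

Lemma thom_comp m1 m2 m3 p1 p2 p3 :
  thom (m:=m1) (m':=m3) p3 = cmp (thom (m:=m2) (m':=m3) p2) (thom (m:=m1) (m':=m2) p1).
Proof.
  move: p1 p2 p3; case: m1 => [|[|m1]]; case: m2 => [|[|m2]]; case: m3 => [|[|m3]] => //= p1 p2 p3;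
  rewrite ?comp1m ?compm1 //; by case: (notF p1) || case: (notF p2) || case: (notF p3).
Qed.

Lemma thom_mv i m m' p :
  (m != m' -> k = ord0 \/ k = lift ord0 i) -> mv i (thom (m:=m) (m':=m') p).
Proof.
  case: m p => [|[|m]]; case: m' => [|[|m']] => //= p H; try (by apply: v_id);
    try (by case: (notF p)).
  - by apply: hc1.1; apply: H.
  - by apply: v_comp; [apply: hc1.1 | apply: hc2.1]; apply: H.
  - by apply: hc2.1; apply: H.
Qed.

Lemma thom_mw m m' p : (m != m' -> k = ord0) -> mw (thom (m:=m) (m':=m') p).
Proof.
  case: m p => [|[|m]]; case: m' => [|[|m']] => //= p H; try (by apply: w_id);
    try (by case: (notF p)).
  - by apply: hc1.2; apply: H.
  - by apply: w_comp; [apply: hc1.2 | apply: hc2.2]; apply: H.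
  - by apply: hc2.2; apply: H.
Qed.

Definition tri_fun : Fun (PCat (ps2 k)) C.
Proof.
  refine (@Build_Fun (PCat (ps2 k)) C (fun w => tobj (w k))
            (fun w w' le => thom (Ple_le k le)) _ _).
  - by move=> w; apply: thom_id.
  - by move=> *; apply: thom_comp.
Defined.

Definition tri : Simp C (ps2 k).
Proof.
  refine (@Build_RelFun n (PStd (ps2 k)) C tri_fun _ _) => /=.
  - move=> i w w' le hv; apply: thom_mv => H; exact: (Pv_moved hv H).
  - move=> w w' le hw; apply: thom_mw => H; exact: (Pw_moved hw H).
Defined.

Definition tm (m : nat) : PObj (ps2 k) := fun j => inord (if j == k then m else 0%N).

Lemma tm_val m j : (m <= 2)%N -> (tm m j : nat) = if j == k then m else 0%N.
Proof. by move=> hm; rewrite /tm inordK // /ps2; case: (j == k). Qed.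

End Tri.

Definition psq (k1 k2 : 'I_n.+1) : 'I_n.+1 -> nat := fun j => nat_of_bool ((j == k1) || (j == k2)).

Section Sq.
Variables (k1 k2 : 'I_n.+1) (a b c d : C) (x1 : Hom a b) (y2 : Hom b d) (y1 : Hom a c)
  (x2 : Hom c d) (cx1 : cls k1 x1) (cy2 : cls k2 y2) (cy1 : cls k2 y1) (cx2 : cls k1 x2)
  (commute : cmp y2 x1 = cmp x2 y1).

Definition sobj (b1 b2 : bool) : C :=
  if b1 then (if b2 then a else c) else (if b2 then b else d).

Definition shom (b1 b2 b1' b2' : bool) :
  (b1' -> b1) -> (b2' -> b2) -> Hom (sobj b1 b2) (sobj b1' b2').
Proof.
  case: b1; case: b1'; case: b2; case: b2' => p q /=.
  all: try exact: False_rect _ (notF (p isT)).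
  all: try exact: False_rect _ (notF (q isT)).
  - exact: idm a.
  - exact: y1.
  - exact: idm c.
  - exact: x1.
  - exact: cmp y2 x1.
  - exact: x2.
  - exact: idm b.
  - exact: y2.
  - exact: idm d.
Defined.

Lemma shom_id b1 b2 p q : shom (b1:=b1) (b2:=b2) (b1':=b1) (b2':=b2) p q = idm (sobj b1 b2).
Proof. by case: b1 p; case: b2 q. Qed.

Lemma shom_comp b1 b2 c1 c2 e1 e2 p1 q1 p2 q2 p3 q3 :
  shom (b1:=b1) (b2:=b2) (b1':=e1) (b2':=e2) p3 q3 =
  cmp (shom (b1:=c1) (b2:=c2) (b1':=e1) (b2':=e2) p2 q2) (shom (b1:=b1) (b2:=b2) (b1':=c1) (b2':=c2) p1 q1).
Proof.
  move: p1 q1 p2 q2 p3 q3; case: b1; case: b2; case: c1; case: c2; case: e1; case: e2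
   => //= p1 q1 p2 q2 p3 q3; rewrite ?comp1m ?compm1 //;
  try (by case: (notF (p1 isT))); try (by case: (notF (p2 isT))); try (by case: (notF (p3 isT)));
  try (by case: (notF (q1 isT))); try (by case: (notF (q2 isT))); try (by case: (notF (q3 isT))).
Qed.

Lemma shom_mv i b1 b2 b1' b2' p q :
  (b1 != b1' -> k1 = ord0 \/ k1 = lift ord0 i) ->
  (b2 != b2' -> k2 = ord0 \/ k2 = lift ord0 i) ->
  mv i (shom (b1:=b1) (b2:=b2) (b1':=b1') (b2':=b2') p q).
Proof.
  move: p q; case: b1; case: b2; case: b1'; case: b2' => //= p q H1 H2;
  try (by apply: v_id); try (by case: (notF (p isT))); try (by case: (notF (q isT))).
  - by apply: cy1.1; apply: H2.
  - by apply: cx1.1; apply: H1.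
  - by apply: v_comp; [apply: cx1.1; apply: H1 | apply: cy2.1; apply: H2].
  - by apply: cx2.1; apply: H1.
  - by apply: cy2.1; apply: H2.
Qed.

Lemma shom_mw b1 b2 b1' b2' p q :
  (b1 != b1' -> k1 = ord0) -> (b2 != b2' -> k2 = ord0) ->
  mw (shom (b1:=b1) (b2:=b2) (b1':=b1') (b2':=b2') p q).
Proof.
  move: p q; case: b1; case: b2; case: b1'; case: b2' => //= p q H1 H2;
  try (by apply: w_id); try (by case: (notF (p isT))); try (by case: (notF (q isT))).
  - by apply: cy1.2; apply: H2.
  - by apply: cx1.2; apply: H1.
  - by apply: w_comp; [apply: cx1.2; apply: H1 | apply: cy2.2; apply: H2].
  - by apply: cx2.2; apply: H1.
  - by apply: cy2.2; apply: H2.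
Qed.

Lemma s_mono (kk : 'I_n.+1) (z z' : PObj (psq k1 k2)) :
  Ple z z' -> ((z' kk : nat) == 0%N) -> ((z kk : nat) == 0%N).
Proof. move=> /forallP /(_ kk) le /eqP e; rewrite e leqn0 in le; exact: le. Qed.

Definition sq_fun : Fun (PCat (psq k1 k2)) C.
Proof.
  refine (@Build_Fun (PCat (psq k1 k2)) C
     (fun z => sobj ((z k1 : nat) == 0%N) ((z k2 : nat) == 0%N))
     (fun z z' le => shom (s_mono (kk:=k1) le) (s_mono (kk:=k2) le)) _ _).
  - by move=> *; apply: shom_id.
  - by move=> *; apply: shom_comp.
Defined.

Lemma bool_moved (z z' : PObj (psq k1 k2)) kk :
  (((z kk : nat) == 0%N) != ((z' kk : nat) == 0%N)) -> (z kk : nat) != z' kk.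
Proof. by apply: contra => /eqP ->. Qed.

Definition sq : Simp C (psq k1 k2).
Proof.
  refine (@Build_RelFun n (PStd (psq k1 k2)) C sq_fun _ _) => /=.
  - move=> i w w' le hv; apply: shom_mv => /bool_moved H; exact: (Pv_moved hv H).
  - move=> w w' le hw; apply: shom_mw => /bool_moved H; exact: (Pw_moved hw H).
Defined.

Definition sv (B1 B2 : bool) : PObj (psq k1 k2) :=
  fun j => inord (nat_of_bool (((j == k1) && ~~ B1) || ((j == k2) && ~~ B2))).

Lemma sv_val B1 B2 j : (sv B1 B2 j : nat) = nat_of_bool (((j == k1) && ~~ B1) || ((j == k2) && ~~ B2)).
Proof. rewrite /sv inordK // /psq; by case: (j == k1); case: (j == k2); case: B1; case: B2. Qed.

End Sq.
End Shapes.

Section Nerve.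
Variable n : nat.
Variables C D : RelCat n.
Variable f : SMap C D.

Definition g_ob (x : C) : D := sm f (pt x) (o0 (n:=n)).

Definition iota_pt (ps : 'I_n.+1 -> nat) (a : PObj ps) : forall k, Mono (ps0 k) (ps k) :=
  fun k => @Build_Mono _ _ (fun _ => a k) (fun _ _ _ => leqnn _).

Lemma restr_pt ps (s : Simp C ps) a : Rcomp s (Pmap (iota_pt a)) = pt (s a).
Proof.
  apply: (@RelFun_ext n _ _ (Rcomp s (Pmap (iota_pt a))) (pt (s a)) (fun _ => erefl)) => x y h.
  rewrite castHom_refl /=.
  rewrite (bool_irrelevance (Pmap_le (iota_pt a) h) (Ple_refl a)).
  exact: (fhom_id s a).
Qed.

Lemma VERT ps (s : Simp C ps) a : sm f s a = g_ob (s a).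
Proof.
  change (Rcomp (sm f s) (Pmap (iota_pt a)) (o0 (n:=n)) = g_ob (s a)).
  by rewrite -sm_nat restr_pt.
Qed.

Definition G (k : 'I_n.+1) (x y : C) (h : Hom x y) (hc : cls k h) : Hom (g_ob x) (g_ob y) :=
  castHom (VERT (edge hc) (a0 k)) (etrans (VERT (edge hc) (a1 k)) (f_equal g_ob (edge_a1 hc)))
    (fhom (sm f (edge hc)) (le01 k)).

Lemma G_irr k (x y : C) (h : Hom x y) (hc hc' : cls k h) : G hc = G hc'.
Proof. by rewrite (proof_irrelevance _ hc hc'). Qed.

Section GSL.
Variables (ps : 'I_n.+1 -> nat) (s : Simp C ps) (a b : PObj ps) (le : @Hom (PCat ps) a b)
  (k : 'I_n.+1) (hab : forall j, j != k -> a j = b j).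

Lemma iota_mono j : forall t t' : 'I_(ps1 k j).+1, (t <= t')%N ->
  ((if (t : nat) == 0%N then a j else b j) <= (if (t' : nat) == 0%N then a j else b j))%N.
Proof.
  move=> t t' le'; case E1: ((t : nat) == 0%N); case E2: ((t' : nat) == 0%N) => //.
  - exact: Ple_le j le.
  - by move: le'; rewrite (eqP E2) leqn0 E1.
Qed.

Definition iota_ab : forall j, Mono (ps1 k j) (ps j) :=
  fun j => @Build_Mono _ _ (fun t => if (t : nat) == 0%N then a j else b j) (@iota_mono j).

Lemma ob_eq (z : PObj (ps1 k)) : Pmap_ob iota_ab z = if (z k : nat) == 0%N then a else b.
Proof.
  apply: functional_extensionality_dep => j; rewrite /Pmap_ob /=.
  case: (eqVneq j k) => [->|hj]; first by case: ((z k : nat) == 0%N).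
  case: ifP => H0; first by case: ((z k : nat) == 0%N) => //; apply: hab.
  exfalso; move: H0; case: (z j) => t /=; rewrite /ps1 (negbTE hj) ltnS leqn0 => /eqP -> .
  by [].
Qed.

Lemma ob_eq_s (z : PObj (ps1 k)) : s (Pmap_ob iota_ab z) = if (z k : nat) == 0%N then s a else s b.
Proof. by rewrite ob_eq; case: ((z k : nat) == 0%N). Qed.

Lemma fhom_to (u v : PObj ps) (e1 : s u = s a) (e2 : s v = s b) (L : @Hom (PCat ps) u v) :
  u = a -> v = b -> castHom e1 e2 (fhom s L) = fhom s le.
Proof.
  move=> eu ev; rewrite (@fhom_PCat_eq n ps C s u a v b _ _ e1 e2 erefl erefl L le) //.
Qed.

Lemma fhom_to_a (u v : PObj ps) (e1 : s u = s a) (e2 : s v = s a) (L : @Hom (PCat ps) u v) :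
  u = a -> v = a -> castHom e1 e2 (fhom s L) = idm (s a).
Proof.
  move=> eu ev; rewrite (@fhom_PCat_eq n ps C s u a v a _ _ e1 e2 erefl erefl L (Ple_refl a)) //.
  exact: (fhom_id s a).
Qed.

Lemma fhom_to_b (u v : PObj ps) (e1 : s u = s b) (e2 : s v = s b) (L : @Hom (PCat ps) u v) :
  u = b -> v = b -> castHom e1 e2 (fhom s L) = idm (s b).
Proof.
  move=> eu ev; rewrite (@fhom_PCat_eq n ps C s u b v b _ _ e1 e2 erefl erefl L (Ple_refl b)) //.
  exact: (fhom_id s b).
Qed.

Variable hc : cls k (fhom s le).

Lemma restr_edge : Rcomp s (Pmap iota_ab) = edge hc.
Proof.
  apply: (@RelFun_ext n _ _ (Rcomp s (Pmap iota_ab)) (edge hc) ob_eq_s) => z z' L /=.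
  rewrite /eobj.
  move: (ob_eq_s z) (ob_eq_s z') (e_mono L) (ob_eq z) (ob_eq z').
  case: ((z k : nat) == 0%N); case: ((z' k : nat) == 0%N) => //= e e' p Ez Ez'.
  - exact: fhom_to_a.
  - exact: fhom_to.
  - by case: (notF (p isT)).
  - exact: fhom_to_b.
Qed.

Lemma GSL_aux (E : Simp C (ps1 k)) (X Y : D) (e0 : sm f E (a0 k) = X) (e1 : sm f E (a1 k) = Y)
  (EX : sm f s a = X) (EY : sm f s b = Y) :
  E = Rcomp s (Pmap iota_ab) -> castHom e0 e1 (fhom (sm f E) (le01 k)) = castHom EX EY (fhom (sm f s) le).
Proof.
  move=> HE; subst E; move: e0 e1; rewrite sm_nat => e0 e1.
  apply: (@fhom_PCat_eq n ps D (sm f s) _ a _ b _ _ e0 e1 EX EY (Pmap_le iota_ab (le01 k)) le).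
  - exact: (ob_eq (a0 k)).
  - by change (Pmap_ob iota_ab (a1 k) = b); rewrite ob_eq /a1 /= /ps1 eqxx.
Qed.

Lemma GSL : castHom (VERT s a) (VERT s b) (fhom (sm f s) le) = G hc.
Proof.
  rewrite /G; symmetry; apply: GSL_aux.
  by rewrite restr_edge.
Qed.
End GSL.

Lemma GSL2 ps (s : Simp C ps) (a b : PObj ps) (le : @Hom (PCat ps) a b) k
  (hab : forall j, j != k -> a j = b j) (x y : C) (ea : s a = x) (eb : s b = y)
  (h : Hom x y) (hc : cls k h) (Ea : sm f s a = g_ob x) (Eb : sm f s b = g_ob y) :
  castHom ea eb (fhom s le) = h -> castHom Ea Eb (fhom (sm f s) le) = G hc.
Proof.
  move=> H; subst x y; subst h.
  rewrite -(GSL hab hc); exact: castHom_irr.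
Qed.

Lemma G_idm k (x : C) (hc : cls k (idm x)) : G hc = idm (g_ob x).
Proof.
  have := @GSL2 _ (pt x) (o0 (n:=n)) (o0 (n:=n)) (Ple_refl (o0 (n:=n))) k (fun _ _ => erefl) x x
     erefl erefl (idm x) hc (VERT (pt x) (o0 (n:=n))) (VERT (pt x) (o0 (n:=n))) erefl.
  move=> <-.
  have -> : fhom (sm f (pt x)) (Ple_refl (o0 (n:=n))) = idm _ := fhom_id _ _.
  exact: castHom_idm.
Qed.

Lemma G_mv i (x y : C) (h : Hom x y) (hc : cls (lift ord0 i) h) : mv i (G hc).
Proof.
  rewrite /G; apply: castHom_mv; apply: rf_v.
  move=> j _ hj /=; by rewrite /ps1 (negbTE hj).
Qed.

Lemma G_mw (x y : C) (h : Hom x y) (hc : cls ord0 h) : mw (G hc).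
Proof.
  rewrite /G; apply: castHom_mw; apply: rf_w.
  move=> j hj /=; by rewrite /ps1 (negbTE hj).
Qed.

Section TriUse.
Variables (k : 'I_n.+1) (x y z : C) (h1 : Hom x y) (h2 : Hom y z) (hc1 : cls k h1) (hc2 : cls k h2).

Lemma thom_spec m1 m2 (p : (m1 <= m2)%N) M1 M2 (p' : (M1 <= M2)%N)
  (e : tobj x y z m1 = tobj x y z M1) (e' : tobj x y z m2 = tobj x y z M2) :
  m1 = M1 -> m2 = M2 -> castHom e e' (thom h1 h2 p) = thom h1 h2 p'.
Proof.
  move=> E1 E2; subst M1 M2; rewrite castHom_refl; congr thom; exact: bool_irrelevance.
Qed.

Let T := tri hc1 hc2.

Lemma eqT m : (m <= 2)%N -> T (tm k m) = tobj x y z m.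
Proof. by move=> hm; rewrite /= tm_val // eqxx. Qed.

Lemma tm_le m m' : (m <= m')%N -> (m' <= 2)%N -> Ple (tm k m) (tm k m').
Proof.
  move=> hmm hm'; apply/forallP => j; rewrite !tm_val //; last exact: leq_trans hm'.
  by case: (j == k).
Qed.

Lemma tm_hab m m' : (m <= 2)%N -> (m' <= 2)%N -> forall j, j != k -> tm k m j = tm k m' j.
Proof. move=> hm hm' j hj; apply: val_inj; by rewrite /= !tm_val // (negbTE hj). Qed.

Lemma G_comp (hc : cls k (cmp h2 h1)) : G hc = cmp (G hc2) (G hc1).
Proof.
  have e0 : T (tm k 0) = x := @eqT 0 isT.
  have e1 : T (tm k 1) = y := @eqT 1 isT.
  have e2 : T (tm k 2) = z := @eqT 2 isT.
  have V0 : sm f T (tm k 0) = g_ob x := etrans (VERT T (tm k 0)) (f_equal g_ob e0).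
  have V1 : sm f T (tm k 1) = g_ob y := etrans (VERT T (tm k 1)) (f_equal g_ob e1).
  have V2 : sm f T (tm k 2) = g_ob z := etrans (VERT T (tm k 2)) (f_equal g_ob e2).
  have l01 := @tm_le 0 1 isT isT; have l12 := @tm_le 1 2 isT isT; have l02 := @tm_le 0 2 isT isT.
  have s01 : castHom V0 V1 (fhom (sm f T) (l01 : @Hom (PCat _) _ _)) = G hc1.
    apply: (@GSL2 _ T _ _ l01 k (@tm_hab 0 1 isT isT) x y e0 e1 h1 hc1 V0 V1).
    by apply: (@thom_spec (tm k 0 k) (tm k 1 k) (Ple_le k l01) 0 1 isT); rewrite tm_val // eqxx.
  have s12 : castHom V1 V2 (fhom (sm f T) (l12 : @Hom (PCat _) _ _)) = G hc2.
    apply: (@GSL2 _ T _ _ l12 k (@tm_hab 1 2 isT isT) y z e1 e2 h2 hc2 V1 V2).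
    by apply: (@thom_spec (tm k 1 k) (tm k 2 k) (Ple_le k l12) 1 2 isT); rewrite tm_val // eqxx.
  have s02 : castHom V0 V2 (fhom (sm f T) (l02 : @Hom (PCat _) _ _)) = G hc.
    apply: (@GSL2 _ T _ _ l02 k (@tm_hab 0 2 isT isT) x z e0 e2 (cmp h2 h1) hc V0 V2).
    by apply: (@thom_spec (tm k 0 k) (tm k 2 k) (Ple_le k l02) 0 2 isT); rewrite tm_val // eqxx.
  rewrite -s01 -s12 -s02 -castHom_comp; congr castHom.
  rewrite -fhom_comp; congr fhom; exact: bool_irrelevance.
Qed.
End TriUse.

Section SqUse.
Variables (k1 k2 : 'I_n.+1) (hk : k1 != k2) (a b c d : C) (x1 : Hom a b) (y2 : Hom b d)
  (y1 : Hom a c) (x2 : Hom c d) (cx1 : cls k1 x1) (cy2 : cls k2 y2) (cy1 : cls k2 y1)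
  (cx2 : cls k1 x2) (commute : cmp y2 x1 = cmp x2 y1).

Let S := sq cx1 cy2 cy1 cx2 commute.

Lemma shom_spec b1 b2 b1' b2' p q B1 B2 B1' B2' p' q'
  (e : sobj a b c d b1 b2 = sobj a b c d B1 B2) (e' : sobj a b c d b1' b2' = sobj a b c d B1' B2') :
  b1 = B1 -> b2 = B2 -> b1' = B1' -> b2' = B2' ->
  castHom e e' (shom x1 y2 y1 x2 (b1:=b1) (b2:=b2) (b1':=b1') (b2':=b2') p q) =
  shom x1 y2 y1 x2 (b1:=B1) (b2:=B2) (b1':=B1') (b2':=B2') p' q'.
Proof.
  move=> E1 E2 E3 E4; subst; rewrite castHom_refl.
  by rewrite (proof_irrelevance _ p p') (proof_irrelevance _ q q').
Qed.

Lemma sv_k1 B1 B2 : ((sv k1 k2 B1 B2 k1 : nat) == 0%N) = B1.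
Proof. have E : (k1 == k2) = false := negbTE hk. by rewrite sv_val eqxx E; case: B1. Qed.

Lemma sv_k2 B1 B2 : ((sv k1 k2 B1 B2 k2 : nat) == 0%N) = B2.
Proof. have E : (k2 == k1) = false by rewrite eq_sym; apply: negbTE. by rewrite sv_val eqxx E /=; case: B2. Qed.

Lemma eqS B1 B2 : S (sv k1 k2 B1 B2) = sobj a b c d B1 B2.
Proof. by rewrite /= sv_k1 sv_k2. Qed.

Lemma sv_le (B1 B2 B1' B2' : bool) : (B1' -> B1) -> (B2' -> B2) -> Ple (sv k1 k2 B1 B2) (sv k1 k2 B1' B2').
Proof.
  move=> H1 H2; apply/forallP => j; rewrite !sv_val.
  by move: H1 H2; case: B1; case: B2; case: B1'; case: B2' => //= H1 H2;
     try (by case: (notF (H1 isT))); try (by case: (notF (H2 isT)));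
     case: (j == k1); case: (j == k2).
Qed.

Lemma sv_hab1 B2 : forall j, j != k1 -> sv k1 k2 true B2 j = sv k1 k2 false B2 j.
Proof. move=> j hj; apply: val_inj; by rewrite /= !sv_val (negbTE hj). Qed.

Lemma sv_hab2 B1 : forall j, j != k2 -> sv k1 k2 B1 true j = sv k1 k2 B1 false j.
Proof. move=> j hj; apply: val_inj; by rewrite /= !sv_val (negbTE hj) !orbF. Qed.

Lemma G_sq : cmp (G cy2) (G cx1) = cmp (G cx2) (G cy1).
Proof.
  have eA : S (sv k1 k2 true true) = a := eqS true true.
  have eB : S (sv k1 k2 false true) = b := eqS false true.
  have eC : S (sv k1 k2 true false) = c := eqS true false.
  have eD : S (sv k1 k2 false false) = d := eqS false false.
  have VA : sm f S (sv k1 k2 true true) = g_ob a := etrans (VERT S _) (f_equal g_ob eA).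
  have VB : sm f S (sv k1 k2 false true) = g_ob b := etrans (VERT S _) (f_equal g_ob eB).
  have VC : sm f S (sv k1 k2 true false) = g_ob c := etrans (VERT S _) (f_equal g_ob eC).
  have VD : sm f S (sv k1 k2 false false) = g_ob d := etrans (VERT S _) (f_equal g_ob eD).
  have lAB := @sv_le true true false true (fun _ => isT) (fun _ => isT).
  have lBD := @sv_le false true false false (fun h => h) (fun _ => isT).
  have lAC := @sv_le true true true false (fun _ => isT) (fun _ => isT).
  have lCD := @sv_le true false false false (fun _ => isT) (fun h => h).
  have lAD := @sv_le true true false false (fun _ => isT) (fun _ => isT).
  have sAB : castHom VA VB (fhom (sm f S) (lAB : @Hom (PCat _) _ _)) = G cx1.
    apply: (@GSL2 _ S _ _ lAB k1 (@sv_hab1 true) a b eA eB x1 cx1 VA VB).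
    by apply: (@shom_spec _ _ _ _ _ _ true true false true (fun _ => isT) (fun _ => isT));
      rewrite ?sv_k1 ?sv_k2.
  have sBD : castHom VB VD (fhom (sm f S) (lBD : @Hom (PCat _) _ _)) = G cy2.
    apply: (@GSL2 _ S _ _ lBD k2 (@sv_hab2 false) b d eB eD y2 cy2 VB VD).
    by apply: (@shom_spec _ _ _ _ _ _ false true false false (fun h => h) (fun _ => isT));
      rewrite ?sv_k1 ?sv_k2.
  have sAC : castHom VA VC (fhom (sm f S) (lAC : @Hom (PCat _) _ _)) = G cy1.
    apply: (@GSL2 _ S _ _ lAC k2 (@sv_hab2 true) a c eA eC y1 cy1 VA VC).
    by apply: (@shom_spec _ _ _ _ _ _ true true true false (fun _ => isT) (fun _ => isT));
      rewrite ?sv_k1 ?sv_k2.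
  have sCD : castHom VC VD (fhom (sm f S) (lCD : @Hom (PCat _) _ _)) = G cx2.
    apply: (@GSL2 _ S _ _ lCD k1 (@sv_hab1 false) c d eC eD x2 cx2 VC VD).
    by apply: (@shom_spec _ _ _ _ _ _ true false false false (fun _ => isT) (fun h => h));
      rewrite ?sv_k1 ?sv_k2.
  rewrite -sAB -sBD -sAC -sCD -!castHom_comp -!fhom_comp.
  congr castHom; congr fhom; exact: bool_irrelevance.
Qed.
End SqUse.
End Nerve.

Section Paths.
Variable n : nat.
Variable C : RelCat n.

Fixpoint vcat (x y z : C) (p : vpath x y) : vpath y z -> vpath x z :=
  match p in vpath x y return vpath y z -> vpath x z with
  | vnil _ => fun q => q
  | vcons _ _ _ i h hv r => fun q => vcons i h hv (vcat r q)
  end.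

Lemma veval_cat (x y z : C) (p : vpath x y) (q : vpath y z) :
  veval (vcat p q) = cmp (veval q) (veval p).
Proof.
  elim: p q => [x' q | x' y' z' i h hv r IH q] /=; first by rewrite compm1.
  by rewrite IH Defs.compA.
Qed.

Lemma ehom_false (x y : C) (h : Hom x y) (b : bool) (E : b = false) (p : b -> true)
  (eb : (if b then x else y) = y) : castHom (erefl x) eb (ehom h p) = h.
Proof. subst b; exact: castHom_refl. Qed.

Lemma edge_spec k (x y : C) (h : Hom x y) (hc : cls k h) (ea : edge hc (a0 k) = x)
  (eb : edge hc (a1 k) = y) : castHom ea eb (fhom (edge hc) (le01 k)) = h.
Proof.
  rewrite (proof_irrelevance _ ea erefl).
  have E : ((a1 k k : nat) == 0%N) = false by rewrite /a1 /= /ps1 eqxx.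
  exact: (@ehom_false x y h _ E (e_mono (le01 k)) eb).
Qed.

Lemma fhom_edge_aux (D : Cat) (F : Fun C D) (x y y0 : C) (e : y0 = y) (u : Hom x y0) (h : Hom x y) :
  castHom erefl e u = h -> fhom F u = castHom erefl (f_equal F (esym e)) (fhom F h).
Proof. by subst y0 => /= <-. Qed.

Lemma nat_uniq (D : RelCat n) (g1 g2 : RelFun C D) :
  (forall ps (s : Simp C ps), Rcomp g1 s = Rcomp g2 s) -> g1 = g2.
Proof.
  move=> H.
  have E : forall x, g1 x = g2 x :=
    fun x => f_equal (fun F : Simp D (ps0 (n:=n)) => F (o0 (n:=n))) (H _ (pt x)).
  apply: (@RelFun_ext n C D g1 g2 E) => x y h.
  have [p <-] := rel_gen h.
  elim: p => [x' | x' y' z' i h' hv r IH] /=.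
    by rewrite !fhom_id castHom_idm.
  rewrite !fhom_comp (castHom_comp _ (E y')) IH; congr cmp.
  have hc := cls_v hv.
  have S1 := RelFun_hom (H _ (edge hc)) (le01 _) (E x') (E (edge hc (a1 _))).
  have Ed := edge_spec (hc:=hc) erefl (edge_a1 hc).
  change (castHom (E x') (E (edge hc (a1 (lift ord0 i))))
            (fhom g1 (fhom (edge hc) (le01 _))) = fhom g2 (fhom (edge hc) (le01 _))) in S1.
  rewrite (fhom_edge_aux g1 Ed) (fhom_edge_aux g2 Ed) in S1.
  move: S1; rewrite castHom_trans => /(castHom_sym) ->.
  by rewrite castHom_trans castHom_trans castHom_refl.
Qed.
End Paths.

Section Exist.
Variable n : nat.
Hypothesis hn : (0 < n)%N.
Variables C D : RelCat n.
Variable f : SMap C D.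

Notation g := (g_ob f).

Fixpoint Gp (x z : C) (p : vpath x z) : Hom (g x) (g z) :=
  match p in vpath x z return Hom (g x) (g z) with
  | vnil x => idm (g x)
  | vcons _ _ _ i h hv r => cmp (Gp r) (G f (cls_v hv))
  end.

Lemma Gp_step (x z : C) (p q : vpath x z) : vstep p q -> Gp p = Gp q.
Proof.
  elim=> {x z p q}.
  - move=> a b c d z i j x1 y2 y1 x2 hx1 hy2 hy1 hx2 r Hc /=.
    rewrite -!Defs.compA; congr cmp.
    case: (eqVneq i j) => [eij|nij].
    + subst j.
      rewrite -(G_comp f (cls_v hx1) (cls_v hy2) (cls_comp (cls_v hx1) (cls_v hy2))).
      rewrite -(G_comp f (cls_v hy1) (cls_v hx2) (cls_comp (cls_v hy1) (cls_v hx2))).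
      move: (cls_comp (cls_v hx1) (cls_v hy2)) (cls_comp (cls_v hy1) (cls_v hx2)).
      rewrite Hc => c1 c2; exact: G_irr.
    + have hk : lift ord0 i != lift ord0 j by apply: contra nij => /eqP /lift_inj ->.
      exact: (G_sq f hk (cls_v hx1) (cls_v hy2) (cls_v hy1) (cls_v hx2) Hc).
  - move=> x z i h r /=.
    by rewrite G_idm compm1.
  - move=> x y z i h hf p q _ IH /=.
    by rewrite IH.
Qed.

Lemma Gp_equiv (x z : C) (p q : vpath x z) : vequiv p q -> Gp p = Gp q.
Proof.
  elim=> {p q} //.
  - by move=> p q; apply: Gp_step.
  - by move=> p q r _ -> _ ->.
Qed.

Lemma Gp_cat (x y z : C) (p : vpath x y) (q : vpath y z) :
  Gp (vcat p q) = cmp (Gp q) (Gp p).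
Proof.
  elim: p q => [x' q | x' y' z' i h hv r IH q] /=; first by rewrite compm1.
  by rewrite IH Defs.compA.
Qed.

Definition path_of (x y : C) (h : Hom x y) : vpath x y :=
  proj1_sig (constructive_indefinite_description _ (rel_gen h)).

Lemma path_ofP (x y : C) (h : Hom x y) : veval (path_of h) = h.
Proof. exact: (proj2_sig (constructive_indefinite_description _ (rel_gen h))). Qed.

Definition ghom (x y : C) (h : Hom x y) : Hom (g x) (g y) := Gp (path_of h).

Lemma ghom_path (x y : C) (h : Hom x y) (p : vpath x y) : veval p = h -> ghom h = Gp p.
Proof.
  move=> Hp; apply: Gp_equiv; apply: rel_rel; by rewrite path_ofP Hp.
Qed.

Definition g_fun : Fun C D.
Proof.
  refine (@Build_Fun C D g ghom _ _).
  - by move=> x; rewrite (@ghom_path _ _ _ (vnil x)).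
  - move=> x y z h1 h2.
    rewrite (@ghom_path _ _ _ (vcat (path_of h1) (path_of h2))); last by rewrite veval_cat !path_ofP.
    by rewrite Gp_cat.
Defined.

Lemma ghom_v i (x y : C) (h : Hom x y) (hv : mv i h) : ghom h = G f (cls_v hv).
Proof.
  rewrite (@ghom_path _ _ _ (vcons i h hv (vnil y))) /=; first by rewrite comp1m.
  by rewrite /= comp1m.
Qed.

Definition i0 : 'I_n := Ordinal hn.

Lemma ghom_w (x y : C) (h : Hom x y) (hw : mw h) : ghom h = G f (cls_w hw).
Proof.
  rewrite (ghom_v (w_sub_v i0 hw)).
  have hk : (ord0 : 'I_n.+1) != lift ord0 i0 by [].
  have := G_sq f hk (cls_w hw) (cls_id (lift ord0 i0) y) (cls_v (w_sub_v i0 hw)) (cls_id ord0 y)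
            erefl.
  by rewrite !G_idm !comp1m => ->.
Qed.

Definition g_rel : RelFun C D.
Proof.
  refine (@Build_RelFun n C D g_fun _ _) => /=.
  - move=> i x y h hv; rewrite (ghom_v hv); exact: G_mv.
  - move=> x y h hw; rewrite (ghom_w hw); exact: G_mw.
Defined.

Lemma ghom_cls k (x y : C) (h : Hom x y) (hc : cls k h) : ghom h = G f hc.
Proof.
  case: (unliftP ord0 k) => [j ->|->] in hc *.
  - rewrite (ghom_v (hc.1 j (or_intror erefl))); exact: G_irr.
  - rewrite (ghom_w (hc.2 erefl)); exact: G_irr.
Qed.

Lemma cls_step ps (s : Simp C ps) (u v : PObj ps) (L : @Hom (PCat ps) u v) k :
  (forall j, j != k -> u j = v j) -> cls k (fhom s L).
Proof.
  move=> hab; split.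
  - move=> i hk; apply: rf_v => j h0 h1; congr val; apply: hab.
    by case: hk => ->.
  - move=> hk; apply: rf_w => j h0; congr val; apply: hab; by rewrite hk.
Qed.

Section Nat.
Variables (ps : 'I_n.+1 -> nat) (s : Simp C ps) (a b : PObj ps) (le : @Hom (PCat ps) a b).

Definition zt (t : nat) : PObj ps := fun j => if (j < t)%N then b j else a j.

Lemma zt_le1 t : Ple a (zt t).
Proof. apply/forallP => j; rewrite /zt; case: ifP => // _; exact: Ple_le j le. Qed.

Lemma zt_step t : Ple (zt t) (zt t.+1).
Proof.
  apply/forallP => j; rewrite /zt.
  case: (ltnP j t) => h1.
  - by have -> : (j < t.+1)%N by apply: ltnW.
  - case: ifP => _ //; exact: Ple_le j le.
Qed.

Definition Q (w : PObj ps) := forall L : Ple a w,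
  ghom (fhom s (L : @Hom (PCat ps) _ _)) = castHom (VERT f s a) (VERT f s w) (fhom (sm f s) L).

Lemma Q0 : Q (zt 0).
Proof.
  have -> : zt 0 = a by apply: functional_extensionality_dep => j; rewrite /zt ltn0.
  move=> L; rewrite (bool_irrelevance L (Ple_refl a)).
  rewrite (fhom_id s a : fhom s (Ple_refl a) = _) (fhom_id g_fun (s a) : ghom _ = _).
  rewrite (fhom_id (sm f s) a : fhom (sm f s) (Ple_refl a) = _); by rewrite castHom_idm.
Qed.

Lemma QS t (ht : (t < n.+1)%N) : Q (zt t) -> Q (zt t.+1).
Proof.
  move=> IH L.
  set k : 'I_n.+1 := Ordinal ht.
  have hab : forall j, j != k -> zt t j = zt t.+1 j.
    move=> j hj; rewrite /zt.
    have hjt : (j : nat) <> t by move=> E; move/eqP: hj; apply; apply: val_inj.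
    have -> : (j < t.+1)%N = (j < t)%N by apply/idP/idP; lia.
    by [].
  have Ls := zt_step t; have Lt := zt_le1 t.
  rewrite (bool_irrelevance L (Ple_trans Ls Lt)).
  change (ghom (fhom s (cmp (Ls : @Hom (PCat ps) _ _) (Lt : @Hom (PCat ps) _ _))) =
          castHom (VERT f s a) (VERT f s (zt t.+1)) (fhom (sm f s) (cmp (Ls : @Hom (PCat ps) _ _) (Lt : @Hom (PCat ps) _ _)))).
  rewrite !fhom_comp (fhom_comp g_fun _ _ : ghom (cmp _ _) = _).
  rewrite (castHom_comp _ (VERT f s (zt t))) -IH; congr cmp.
  have hc := cls_step s (Ls : @Hom (PCat ps) _ _) hab.
  change (ghom (fhom s (Ls : @Hom (PCat ps) _ _)) = castHom (VERT f s (zt t)) (VERT f s (zt t.+1)) (fhom (sm f s) Ls)).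
  rewrite (ghom_cls hc); symmetry; exact: GSL.
Qed.

Lemma Qall t : (t <= n.+1)%N -> Q (zt t).
Proof.
  elim: t => [|t IH] ht; first exact: Q0.
  apply: QS => //; apply: IH; exact: ltnW.
Qed.

Lemma nat_hom : ghom (fhom s le) = castHom (VERT f s a) (VERT f s b) (fhom (sm f s) le).
Proof.
  have := @Qall n.+1 (leqnn _).
  have -> : zt n.+1 = b by apply: functional_extensionality_dep => j; rewrite /zt ltn_ord.
  by move/(_ le).
Qed.
End Nat.

Lemma g_nat ps (s : Simp C ps) : Rcomp g_rel s = sm f s.
Proof.
  apply: (@RelFun_ext n _ _ (Rcomp g_rel s) (sm f s) (fun a => esym (VERT f s a))) => a b le.
  change (castHom (esym (VERT f s a)) (esym (VERT f s b)) (ghom (fhom s le)) = fhom (sm f s) le).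
  by rewrite nat_hom castHom_trans castHom_refl.
Qed.
End Exist.

Definition idS n (C : RelCat n) : SMap C C :=
  {| sm := fun ps s => s; sm_nat := fun _ _ _ _ => erefl |}.

Lemma Rcomp_assoc n (A B X Y : MCat n) (h : RelFun X Y) (g : RelFun B X) (f : RelFun A B) :
  Rcomp (Rcomp h g) f = Rcomp h (Rcomp g f).
Proof.
  apply: (@RelFun_ext n _ _ (Rcomp (Rcomp h g) f) (Rcomp h (Rcomp g f)) (fun _ => erefl)) => x y u.
  exact: castHom_refl.
Qed.

Lemma Rcomp_idl n (A B : MCat n) (f : RelFun A B) : Rcomp (Rid B) f = f.
Proof.
  apply: (@RelFun_ext n _ _ (Rcomp (Rid B) f) f (fun _ => erefl)) => x y u.
  exact: castHom_refl.
Qed.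

Lemma univ_id n (hn : (0 < n)%N) (C : RelCat n) : universal (idS C).
Proof.
  move=> D f; exists (g_rel hn f); split.
  - by move=> ps s; exact: g_nat.
  - move=> g' Hg'; apply: nat_uniq => ps s.
    by rewrite (Hg' ps s) g_nat.
Qed.

Theorem proposition4p4 (n : nat) (hn : (1 <= n)%N) (C : RelCat n) :
  (exists (L : RelCat n) (eta : SMap C L), universal eta) /\
  (forall (L : RelCat n) (eta : SMap C L), universal eta ->
     forall e : RelFun L C, is_counit eta e -> isomorphism e).
Proof.
  split; first by exists C, (idS C); exact: univ_id.
  move=> L eta Ueta e He.
  have [h [Hh _]] := univ_id hn eta.
  exists h; split.
  - have [g0 [_ Hu]] := Ueta L eta.
    rewrite (Hu (Rcomp h e)); last first.
      by move=> ps s; rewrite Rcomp_assoc He; exact: Hh.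
    symmetry; apply: Hu => ps s; exact: Rcomp_idl.
  - apply: nat_uniq => ps s.
    by rewrite Rcomp_assoc (Hh ps s) He Rcomp_idl.
Qed.
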